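(* (1) A geodesic metric space is $(L,C)$-quasi-isometric to a countable simplicial tree for some $L\geqslant 1$, $C\geqslant 0$ if and only if it is $(1,C')$-quasi-isometric to a countable simplicial tree for some $C'\geqslant 0$. (2) A geodesic metric space is $(L,C)$-quasi-isometric to a locally finite simplicial tree for some $L\geqslant 1$, $C\geqslant 0$ if and only if it is $(1,C')$-quasi-isometric to a locally finite simplicial tree for some $C'\geqslant 0$.
   Context: An $(L,C)$-quasi-isometry $f:(X,d_X)\to(Y,d_Y)$ satisfies $\frac1L d_X(a,b)-C\leqslant d_Y(f(a),f(b))\leqslant Ld_X(a,b)+C$ for all $a,b$, and every point of $Y$ is within distance $C$ of $f(X)$. A simplicial tree is a 1-dimensional simplicial complex which is an $\mathbb{R}$-tree for the path metric in which each edge has length 1; it is countable if it has countably many vertices, and locally finite if every vertex has finitely many neighbours. *)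

(* Defs.v *)
From Stdlib Require Import Reals Lra List ClassicalEpsilon.
Import ListNotations.
Open Scope R_scope.

Definition is_metric {X : Type} (d : X -> X -> R) : Prop :=
  (forall x y, 0 <= d x y) /\
  (forall x y, d x y = 0 <-> x = y) /\
  (forall x y, d x y = d y x) /\
  (forall x y z, d x z <= d x y + d y z).

Definition geodesic {X : Type} (d : X -> X -> R) : Prop :=
  forall x y, exists g : R -> X,
    g 0 = x /\ g (d x y) = y /\
    forall s t, 0 <= s <= d x y -> 0 <= t <= d x y -> d (g s) (g t) = Rabs (s - t).

Definition is_QI {X Y : Type} (dX : X -> X -> R) (dY : Y -> Y -> R)
  (f : X -> Y) (L C : R) : Prop :=
  (forall a b, / L * dX a b - C <= dY (f a) (f b) /\
               dY (f a) (f b) <= L * dX a b + C) /\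
  (forall y, exists x, dY y (f x) <= C).

Section Graph.
Variable V : Type.
Variable adj : V -> V -> Prop.

Inductive walk : V -> V -> nat -> Prop :=
| walk0 v : walk v v 0
| walkS u v w n : adj u v -> walk v w n -> walk u w (S n).

Fixpoint chain (l : list V) : Prop :=
  match l with
  | x :: ((y :: _) as t) => adj x y /\ chain t
  | _ => True
  end.

Definition connected_graph : Prop := forall u v, exists n, walk u v n.

Definition acyclic : Prop :=
  forall (v : V) (l : list V),
    (3 <= length (v :: l))%nat -> NoDup (v :: l) -> chain ((v :: l) ++ [v]) -> False.

Definition simplicial_tree : Prop :=
  inhabited V /\
  (forall u v, adj u v -> adj v u) /\
  (forall v, ~ adj v v) /\
  connected_graph /\ acyclic.



Definition locally_finite_graph : Prop :=
  forall v, exists l : list V, forall w, adj v w -> In w l.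

Definition gdist (a b : V) : R :=
  INR (epsilon (inhabits 0%nat)
         (fun n => walk a b n /\ forall m, walk a b m -> (n <= m)%nat)).

(** A point is (a, b, t): either the vertex a (a = b, t = 0), or the point of the
    edge {a,b} at distance t from a. Different representations of the same
    point (e.g. (a,b,t) and (b,a,1-t)) are at distance 0. *)
Record TPoint := {
  tp_a : V; tp_b : V; tp_t : R;
  tp_ok : (tp_a = tp_b /\ tp_t = 0) \/ (adj tp_a tp_b /\ 0 <= tp_t <= 1) }.

Definition ends (p : TPoint) : list (V * R) :=
  [(tp_a p, tp_t p); (tp_b p, 1 - tp_t p)].

Definition Rmin_list (r0 : R) (l : list R) : R := fold_right Rmin r0 l.

(** Length of the shortest route leaving each point through one of the
    endpoints of its edge. *)
Definition via (p q : TPoint) : R :=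
  match
    flat_map (fun e => map (fun e' => snd e + gdist (fst e) (fst e') + snd e') (ends q))
      (ends p)
  with
  | [] => 0
  | r :: rs => Rmin_list r rs
  end.

Definition tree_dist (p q : TPoint) : R :=
  if excluded_middle_informative (tp_a p = tp_a q /\ tp_b p = tp_b q) then
    Rmin (Rabs (tp_t p - tp_t q)) (via p q)
  else if excluded_middle_informative (tp_a p = tp_b q /\ tp_b p = tp_a q) then
    Rmin (Rabs (tp_t p - (1 - tp_t q))) (via p q)
  else via p q.

End Graph.

Arguments tree_dist {V adj}.

Definition countable_graph (V : Type) (adj : V -> V -> Prop) : Prop :=
  exists g : V -> nat, forall u v, g u = g v -> u = v.

Definition QI_to_tree (P : forall V : Type, (V -> V -> Prop) -> Prop)
  {X : Type} (d : X -> X -> R) (L C : R) : Prop :=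
  exists (V : Type) (adj : V -> V -> Prop),
    simplicial_tree V adj /\ P V adj /\
    exists f : X -> TPoint V adj, is_QI d tree_dist f L C.

(* Main.v *)
Require Import Defs.
From Stdlib Require Import Reals ZArith Lra Lia List Wf_nat Permutation Cantor ClassicalEpsilon Classical ProofIrrelevance FunctionalExtensionality PropExtensionality.
Import ListNotations.
Open Scope R_scope.
Arguments tp_a {V adj}.
Arguments tp_b {V adj}.
Arguments tp_t {V adj}.
Arguments tp_ok {V adj}.

Section GraphFacts.
Variable V : Type.
Variable adj : V -> V -> Prop.

Inductive pth : V -> list V -> V -> Prop :=
| pth_nil a : pth a [] a
| pth_cons a b l c : adj a b -> pth b l c -> pth a (b :: l) c.

Lemma walk_pth a b n : walk V adj a b n -> exists l, pth a l b /\ length l = n.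
Proof.
  induction 1 as [v|u v w n H Hw IH].
  - exists []. split; [constructor|reflexivity].
  - destruct IH as [l [Hl Hn]]. exists (v :: l). split; [econstructor; eauto|simpl; lia].
Qed.

Lemma pth_walk a b l : pth a l b -> walk V adj a b (length l).
Proof. induction 1; simpl; econstructor; eauto. Qed.

Lemma pth_app a l b m c : pth a l b -> pth b m c -> pth a (l ++ m) c.
Proof. induction 1; simpl; intros; auto. econstructor; eauto. Qed.

Lemma pth_app_inv a l m c : pth a (l ++ m) c -> exists b, pth a l b /\ pth b m c.
Proof.
  revert a. induction l as [|x l IH]; simpl; intros a H.
  - exists a. split; [constructor|auto].
  - inversion H; subst. destruct (IH _ H5) as [b [H1 H2]]. exists b. split; auto. econstructor; eauto.
Qed.

Lemma pth_last_In a l b : pth a l b -> In b (a :: l).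
Proof. induction 1; simpl in *; tauto. Qed.

Lemma pth_In_app a l b m c x : pth a l b -> pth b m c ->
  In x (a :: l ++ m) -> In x (a :: l) \/ In x (b :: m).
Proof.
  intros H1 H2 Hx. change (a :: l ++ m) with ((a :: l) ++ m) in Hx.
  apply in_app_or in Hx. destruct Hx; [left; auto| right; simpl; auto].
Qed.

Lemma pth_snoc_inv a l b : pth a l b -> l <> [] ->
  exists l' w, pth a l' w /\ adj w b /\ S (length l') = length l /\ incl (a :: l') (a :: l).
Proof.
  induction 1 as [a|a b l c Hab Hp IH]; intros Hne; [congruence|].
  destruct l as [|y l].
  - inversion Hp; subst. exists [], a. split; [constructor|]. split; [auto|]. split; [reflexivity|].
    intros z Hz; simpl in *; tauto.
  - destruct IH as [l' [w [H1 [H2 [H3 H4]]]]]; [congruence|].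
    exists (b :: l'), w. repeat split; auto.
    + econstructor; eauto.
    + simpl in *; lia.
    + intros z Hz. simpl in Hz. destruct Hz as [<-|Hz]; [simpl; auto|].
      right. apply H4. exact Hz.
Qed.

Lemma pth_prefix a l b x : pth a l b -> In x (a :: l) ->
  exists l1, pth a l1 x /\ (length l1 <= length l)%nat /\ incl (a :: l1) (a :: l).
Proof.
  induction 1 as [a|a b l c Hab Hp IH]; intros Hx.
  - simpl in Hx. destruct Hx as [<-|[]]. exists []. repeat split; [constructor|simpl; lia|intros z; auto].
  - simpl in Hx. destruct Hx as [<-|Hx].
    + exists []. repeat split; [constructor|simpl; lia|intros z Hz; simpl in *; tauto].
    + destruct (IH Hx) as [l1 [H1 [H2 H3]]]. exists (b :: l1). repeat split.
      * econstructor; eauto.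
      * simpl; lia.
      * intros z Hz. simpl in Hz. destruct Hz as [<-|Hz]; [simpl; auto|].
        right. apply H3. exact Hz.
Qed.

Lemma pth_suffix a l b x : pth a l b -> In x (a :: l) ->
  exists l1 l2, a :: l = l1 ++ x :: l2 /\ pth x l2 b.
Proof.
  induction 1 as [a|a b l c Hab Hp IH]; intros Hx.
  - simpl in Hx. destruct Hx as [<-|[]]. exists [], []. split; [reflexivity|constructor].
  - simpl in Hx. destruct Hx as [<-|Hx].
    + exists [], (b :: l). split; [reflexivity|econstructor; eauto].
    + destruct (IH Hx) as [l1 [l2 [E H]]]. exists (a :: l1), l2. split; auto.
      simpl. rewrite E. reflexivity.
Qed.

Hypothesis Hsym : forall u v, adj u v -> adj v u.

Lemma pth_rev a l b : pth a l b -> exists l', rev (a :: l) = b :: l' /\ pth b l' a.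
Proof.
  induction 1 as [a|a b l c Hab Hp IH].
  - exists []. split; [reflexivity|constructor].
  - destruct IH as [l' [E H]]. exists (l' ++ [a]). split.
    + change (rev (a :: b :: l)) with (rev (b :: l) ++ [a]). rewrite E. reflexivity.
    + apply pth_app with b; auto. econstructor; [apply Hsym; eauto|constructor].
Qed.

Lemma pth_rev' a l b : pth a l b -> exists l', pth b l' a /\ length l' = length l /\
  (forall x, In x (b :: l') <-> In x (a :: l)).
Proof.
  intros H. destruct (pth_rev _ _ _ H) as [l' [E H']]. exists l'. repeat split; auto.
  - apply (f_equal (@length V)) in E. rewrite length_rev in E. simpl in E. lia.
  - intros Hx. rewrite <- E in Hx. apply in_rev in Hx. exact Hx.
  - intros Hx. rewrite <- E. apply in_rev. rewrite rev_involutive. exact Hx.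
Qed.


Lemma nat_min_ex (P : nat -> Prop) : (exists n, P n) -> exists n, P n /\ forall m, P m -> (n <= m)%nat.
Proof.
  intros [n Hn]. revert Hn. induction n as [n IH] using lt_wf_ind. intros Hn.
  destruct (classic (exists m, P m /\ (m < n)%nat)) as [[m [Hm Hlt]]|Hno].
  - exact (IH m Hlt Hm).
  - exists n. split; auto. intros m Hm. destruct (Nat.lt_ge_cases m n) as [Hl|Hl]; auto.
    exfalso. apply Hno. eauto.
Qed.

Definition dn (a b : V) : nat :=
  epsilon (inhabits 0%nat)
         (fun n => walk V adj a b n /\ forall m, walk V adj a b m -> (n <= m)%nat).

Lemma gdist_dn a b : gdist V adj a b = INR (dn a b).
Proof. reflexivity. Qed.

Hypothesis Hconn : connected_graph V adj.

Lemma dn_spec a b : walk V adj a b (dn a b) /\ forall m, walk V adj a b m -> (dn a b <= m)%nat.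
Proof.
  unfold dn. apply epsilon_spec. apply nat_min_ex. apply Hconn.
Qed.

Lemma dn_path a b : exists l, pth a l b /\ length l = dn a b.
Proof. apply walk_pth. apply dn_spec. Qed.

Lemma dn_le a l b : pth a l b -> (dn a b <= length l)%nat.
Proof. intros H. apply dn_spec. apply pth_walk. exact H. Qed.

Lemma dn_tri a b c : (dn a c <= dn a b + dn b c)%nat.
Proof.
  destruct (dn_path a b) as [l1 [H1 E1]]. destruct (dn_path b c) as [l2 [H2 E2]].
  rewrite <- E1, <- E2, <- length_app. apply dn_le. eapply pth_app; eauto.
Qed.

Lemma dn_sym a b : dn a b = dn b a.
Proof.
  assert (H : forall a b, (dn a b <= dn b a)%nat).
  { intros x y. destruct (dn_path y x) as [l [H E]]. destruct (pth_rev' _ _ _ H) as [l' [H' [E' _]]].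
    rewrite <- E, <- E'. apply dn_le; auto. }
  pose proof (H a b). pose proof (H b a). lia.
Qed.

Lemma dn_refl a : dn a a = 0%nat.
Proof. pose proof (dn_le a [] a (pth_nil a)). simpl in H. lia. Qed.

Lemma dn_adj a b : adj a b -> (dn a b <= 1)%nat.
Proof. intros H. apply (dn_le a [b] b). econstructor; eauto. constructor. Qed.

Lemma dn_zero a b : dn a b = 0%nat -> a = b.
Proof.
  intros H. destruct (dn_path a b) as [l [Hp E]]. rewrite H in E. destruct l; [|discriminate].
  inversion Hp; auto.
Qed.


Lemma pth_nodup a l b : pth a l b -> exists l', pth a l' b /\ NoDup (a :: l') /\ incl (a :: l') (a :: l).
Proof.
  induction 1 as [a|a c l b Hac Hp IH].
  - exists []. split; [constructor|]. split; [constructor; [simpl; tauto|constructor]|intros z; auto].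
  - destruct IH as [l' [H1 [H2 H3]]].
    destruct (classic (In a (c :: l'))) as [Hin|Hnin].
    + destruct (pth_suffix _ _ _ _ H1 Hin) as [l1 [l2 [E H4]]].
      exists l2. split; auto. split.
      * rewrite E in H2. apply NoDup_app_remove_l in H2. exact H2.
      * intros z Hz. assert (In z (c :: l')) as Hz'.
        { rewrite E. apply in_or_app. right. exact Hz. }
        apply H3 in Hz'. simpl in *. tauto.
    + exists (c :: l'). split; [econstructor; eauto|]. split; [constructor; auto|].
      intros z Hz. simpl in Hz. destruct Hz as [<-|Hz]; [simpl; auto|].
      apply H3 in Hz. simpl in *. tauto.
Qed.

Lemma pth_chain a l b m : pth a l b -> adj b m -> chain V adj ((a :: l) ++ [m]).
Proof.
  induction 1 as [a|a c l b Hac Hp IH]; intros H; simpl.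
  - auto.
  - split; auto. apply IH; auto.
Qed.

Hypothesis Hacyc : acyclic V adj.

Lemma cyc m u w l : adj m u -> adj m w -> u <> w -> pth u l w -> ~ In m (u :: l) -> False.
Proof.
  intros Hu Hw Hne Hp Hm.
  destruct (pth_nodup _ _ _ Hp) as [l' [H1 [H2 H3]]].
  apply (Hacyc m (u :: l')).
  - destruct l' as [|y l'].
    + inversion H1; subst. congruence.
    + simpl. lia.
  - apply NoDup_cons; [|exact H2]. intros Hin. apply Hm. apply H3. exact Hin.
  - change ((m :: u :: l') ++ [m]) with (m :: ((u :: l') ++ [m])).
    assert (chain V adj ((u :: l') ++ [m])) as Hc by (apply (pth_chain _ _ w); auto).
    simpl in Hc |- *. split; auto.
Qed.

Definition Sep (a b mu : V) : Prop := forall l, pth a l b -> In mu (a :: l).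

Lemma Sep_sym a b mu : Sep a b mu -> Sep b a mu.
Proof.
  intros H l Hp. destruct (pth_rev' _ _ _ Hp) as [l' [H1 [_ H3]]].
  apply H3. apply H. exact H1.
Qed.

Lemma list_argmin (g : V -> nat) (A : list V) : forall (a : V), In a A ->
  exists mu, In mu A /\ forall v, In v A -> (g mu <= g v)%nat.
Proof.
  induction A as [|x A IH]; intros a0 Ha; [destruct Ha|].
  destruct A as [|y A].
  - exists x. split; [simpl; auto|]. intros v [<-|[]]. lia.
  - destruct (IH y (or_introl eq_refl)) as [mu [H1 H2]].
    destruct (Nat.le_gt_cases (g x) (g mu)).
    + exists x. split; [simpl; auto|]. intros v [<-|Hv]; [lia|]. specialize (H2 v Hv). lia.
    + exists mu. split; [simpl; auto|]. intros v [<-|Hv]; [lia|]. auto.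
Qed.

Lemma NoDup_app_disj (l m : list V) x : NoDup (l ++ m) -> In x l -> In x m -> False.
Proof.
  induction l as [|y l IH]; simpl; intros H H1 H2; [auto|].
  inversion H; subst. destruct H1 as [<-|H1].
  - apply H4. apply in_or_app. right; auto.
  - eauto.
Qed.

Lemma split_pred a P b mu : pth a P b -> NoDup (a :: P) -> In mu (a :: P) -> mu <> a ->
  exists l1 c l2, pth a l1 c /\ adj c mu /\ pth mu l2 b /\ ~ In mu (a :: l1) /\
    incl (a :: l1) (a :: P) /\ incl (mu :: l2) (a :: P) /\ (forall x, In x (a :: l1) -> ~ In x (mu :: l2))
    /\ NoDup (mu :: l2).
Proof.
  intros Hp Hnd Hin Hne.
  destruct (pth_suffix _ _ _ _ Hp Hin) as [l1 [l2 [E H2]]].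
  destruct l1 as [|a' l1]; simpl in E; [injection E as E1 E2; congruence|].
  assert (Hnd' : NoDup ((a' :: l1) ++ mu :: l2)) by (change (NoDup (a' :: l1 ++ mu :: l2)); rewrite <- E; exact Hnd).
  injection E as Ea EP. subst a'. rewrite EP in Hp.
  destruct (pth_app_inv _ _ _ _ Hp) as [c [Hq Hr]].
  inversion Hr; subst.
  exists l1, c, l2. split; auto. split; auto. split; auto. split; [|split; [|split]].
  - intros Hm. eapply NoDup_app_disj; eauto. simpl; auto.
  - intros z Hz. change (In z ((a :: l1) ++ mu :: l2)). apply in_or_app. left. exact Hz.
  - intros z Hz. change (In z ((a :: l1) ++ mu :: l2)). apply in_or_app. right. exact Hz.
  - split; [intros x Hx Hx'; eapply NoDup_app_disj; eauto|]. eapply NoDup_app_remove_l; eauto.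
Qed.

Lemma median_half o a P b mu : pth a P b -> NoDup (a :: P) -> In mu (a :: P) ->
  (forall v, In v (a :: P) -> (dn o mu <= dn o v)%nat) -> Sep o a mu.
Proof.
  intros Hp Hnd Hin Hmin W HW.
  destruct (classic (mu = a)) as [->|Hna]; [apply pth_last_In; exact HW|].
  destruct (classic (mu = o)) as [->|Hno]; [simpl; auto|].
  destruct (classic (In mu (o :: W))) as [|HnW]; [auto|exfalso].
  destruct (split_pred _ _ _ _ Hp Hnd Hin Hna) as [l1 [c [l2 [H1 [H2 [H3 [H4 [H5 [H6 [H7 H8]]]]]]]]]].
  destruct (dn_path o mu) as [Q [HQ EQ]].
  destruct (pth_snoc_inv _ _ _ HQ) as [Q' [w [HQ' [Hw [EQ' HQi]]]]].
  { intros ->. inversion HQ; congruence. }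
  assert (HmQ : ~ In mu (o :: Q')).
  { intros Hm. destruct (pth_prefix _ _ _ _ HQ' Hm) as [l3 [Hl3 [Hlen _]]].
    pose proof (dn_le _ _ _ Hl3). lia. }
  destruct (pth_rev' _ _ _ HQ') as [R [HR [_ HRi]]].
  assert (Hwc : pth w (R ++ W ++ l1) c).
  { apply pth_app with o; auto. apply pth_app with a; auto. }
  destruct (classic (w = c)) as [->|Hwc'].
  - assert (In c (a :: P)) as HcP by (apply H5; apply pth_last_In; exact H1).
    specialize (Hmin c HcP). pose proof (dn_le _ _ _ HQ'). lia.
  - apply (cyc mu w c (R ++ W ++ l1)); auto.
    intros Hm. destruct (pth_In_app _ _ _ _ _ _ HR (pth_app _ _ _ _ _ HW H1) Hm) as [Hm'|Hm'].
    + apply HmQ. apply HRi. exact Hm'.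
    + destruct (pth_In_app _ _ _ _ _ _ HW H1 Hm') as [Hm''|Hm'']; auto.
Qed.

Lemma median o a b : exists mu, Sep a b mu /\ Sep o a mu /\ Sep o b mu.
Proof.
  destruct (dn_path a b) as [P0 [HP0 _]].
  destruct (pth_nodup _ _ _ HP0) as [P [Hp [Hnd _]]].
  destruct (list_argmin (dn o) (a :: P) a (or_introl eq_refl)) as [mu [Hin Hmin]].
  destruct (pth_rev _ _ _ Hp) as [P' [EP' Hp']].
  assert (HinP' : forall x, In x (b :: P') <-> In x (a :: P)).
  { intros x. rewrite <- EP'. split; intros H; [apply in_rev in H; exact H|apply in_rev; rewrite rev_involutive; exact H]. }
  exists mu. split; [|split].
  - intros W HW.
    destruct (classic (mu = a)) as [->|Hna]; [simpl; auto|].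
    destruct (classic (mu = b)) as [->|Hnb]; [apply pth_last_In; exact HW|].
    destruct (classic (In mu (a :: W))) as [|HnW]; [auto|exfalso].
    destruct (split_pred _ _ _ _ Hp Hnd Hin Hna) as [l1 [c [l2 [H1 [H2 [H3 [H4 [H5 [H6 [H7 H8]]]]]]]]]].
    destruct l2 as [|b1 l2]; [inversion H3; congruence|].
    inversion H3; subst.
    destruct (pth_rev' _ _ _ H1) as [R1 [HR1 [_ HR1i]]].
    destruct (pth_rev' _ _ _ H12) as [R2 [HR2 [_ HR2i]]].
    apply (cyc mu c b1 (R1 ++ W ++ R2)); auto.
    + intros Heq. apply (H7 c); [apply pth_last_In; exact H1|rewrite Heq; simpl; auto].
    + apply pth_app with a; auto. apply pth_app with b; auto.
    + intros Hm. destruct (pth_In_app _ _ _ _ _ _ HR1 (pth_app _ _ _ _ _ HW HR2) Hm) as [Hm'|Hm'].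
      * apply H4. apply HR1i. exact Hm'.
      * destruct (pth_In_app _ _ _ _ _ _ HW HR2 Hm') as [Hm''|Hm'']; auto.
        apply HR2i in Hm''. inversion H8; subst. auto.
  - apply (median_half o a P b); auto.
  - apply (median_half o b P' a); auto.
    + rewrite <- EP'. apply NoDup_rev. exact Hnd.
    + apply HinP'. exact Hin.
    + intros v Hv. apply Hmin. apply HinP'. exact Hv.
Qed.



Lemma Rabs_le_inv x b : Rabs x <= b -> - b <= x <= b.
Proof. intros H. split_Rabs; lra. Qed.

Lemma INR_le_plus (x y k : nat) : (x <= y + k)%nat -> INR x <= INR y + INR k.
Proof. intros H. rewrite <- plus_INR. apply le_INR. exact H. Qed.

Lemma tp_dn (p : TPoint V adj) : (dn (tp_a p) (tp_b p) <= 1)%nat /\ 0 <= tp_t p <= 1.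
Proof.
  destruct p as [a b t ok]; simpl. destruct ok as [[-> ->]|[H1 H2]].
  - rewrite dn_refl. split; [lia|lra].
  - split; auto. apply dn_adj; auto.
Qed.

Lemma TD (p q : TPoint V adj) : Rabs (tree_dist p q - INR (dn (tp_a p) (tp_a q))) <= 2.
Proof.
  pose proof (tp_dn p) as [Hp1 Hp2]. pose proof (tp_dn q) as [Hq1 Hq2].
  destruct p as [a b t ok]; destruct q as [a' b' t' ok']; simpl in *.
  assert (E1 : Rabs (INR (dn a b') - INR (dn a a')) <= 1).
  { pose proof (dn_tri a a' b'). pose proof (dn_tri a b' a'). rewrite (dn_sym b' a') in H0.
    apply Rabs_le. split.
    - pose proof (INR_le_plus (dn a a') (dn a b') 1 ltac:(lia)). simpl in H1. lra.
    - pose proof (INR_le_plus (dn a b') (dn a a') 1 ltac:(lia)). simpl in H1. lra. }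
  assert (E2 : Rabs (INR (dn b a') - INR (dn a a')) <= 1).
  { pose proof (dn_tri a b a'). pose proof (dn_tri b a a'). rewrite (dn_sym b a) in H0.
    apply Rabs_le. split.
    - pose proof (INR_le_plus (dn a a') (dn b a') 1 ltac:(lia)). simpl in H1. lra.
    - pose proof (INR_le_plus (dn b a') (dn a a') 1 ltac:(lia)). simpl in H1. lra. }
  assert (E3 : Rabs (INR (dn b b') - INR (dn a a')) <= 2).
  { pose proof (dn_tri a b a'). pose proof (dn_tri b b' a'). pose proof (dn_tri b a b').
    pose proof (dn_tri a a' b'). pose proof (dn_sym b a). pose proof (dn_sym b' a').
    apply Rabs_le. split.
    - assert (dn a a' <= dn b b' + 2)%nat by lia.
      pose proof (INR_le_plus _ _ 2 H5). simpl in H6. lra.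
    - assert (dn b b' <= dn a a' + 2)%nat by lia.
      pose proof (INR_le_plus _ _ 2 H5). simpl in H6. lra. }
  pose proof (pos_INR (dn a a')). pose proof (pos_INR (dn a b')).
  pose proof (pos_INR (dn b a')). pose proof (pos_INR (dn b b')).
  unfold tree_dist, via, ends, Rmin_list; simpl. rewrite !gdist_dn.
  revert E1 E2 E3.
  generalize (INR (dn a b')) (INR (dn b a')) (INR (dn b b')). intros r1 r2 r3 E1 E2 E3.
  destruct (excluded_middle_informative (a = a' /\ b = b')) as [[<- <-]|Hn1].
  - rewrite dn_refl in *. simpl in *.
    apply Rabs_le_inv in E1; apply Rabs_le_inv in E2; apply Rabs_le_inv in E3.
    unfold Rmin; repeat destruct Rle_dec; apply Rabs_le; split_Rabs; lra.
  - destruct (excluded_middle_informative (a = b' /\ b = a')) as [[-> ->]|Hn2].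
    + pose proof (INR_le_plus (dn b' a') 0 1 ltac:(rewrite dn_sym; lia)). simpl in H3.
      apply Rabs_le_inv in E1; apply Rabs_le_inv in E2; apply Rabs_le_inv in E3.
      unfold Rmin; repeat destruct Rle_dec; apply Rabs_le; split_Rabs; lra.
    + apply Rabs_le_inv in E1; apply Rabs_le_inv in E2; apply Rabs_le_inv in E3.
      unfold Rmin; repeat destruct Rle_dec; apply Rabs_le; lra.
Qed.

End GraphFacts.

Section ChainFacts.
Variable V : Type.
Variable adj : V -> V -> Prop.

Lemma chain_app l x m : chain V adj (l ++ x :: m) <-> chain V adj (l ++ [x]) /\ chain V adj (x :: m).
Proof.
  induction l as [|a l IH]; simpl.
  - destruct m; simpl; tauto.
  - destruct l as [|b l]; simpl in *.
    + destruct m; simpl; tauto.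
    + rewrite IH. tauto.
Qed.

Lemma rotate v l w : In w (v :: l) -> chain V adj ((v :: l) ++ [v]) ->
  exists B, Permutation (v :: l) (w :: B) /\ chain V adj ((w :: B) ++ [w]).
Proof.
  intros Hin Hc. destruct (in_split _ _ Hin) as [l1 [l2 E]].
  destruct l1 as [|v' l1].
  - simpl in E. injection E as E1 E2. rewrite <- E1. exists l. split; [apply Permutation_refl|exact Hc].
  - simpl in E. injection E as E1 E2. subst v' l.
    exists (l2 ++ v :: l1). split.
    + change (Permutation ((v :: l1) ++ w :: l2) ((w :: l2) ++ v :: l1)). apply Permutation_app_comm.
    + replace ((v :: l1 ++ w :: l2) ++ [v]) with ((v :: l1) ++ w :: (l2 ++ [v])) in Hc
        by (simpl; rewrite <- app_assoc; reflexivity).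
      apply chain_app in Hc. destruct Hc as [H1 H2].
      replace ((w :: l2 ++ v :: l1) ++ [w]) with ((w :: l2) ++ v :: (l1 ++ [w]))
        by (simpl; rewrite <- app_assoc; reflexivity).
      apply chain_app. split.
      * exact H2.
      * exact H1.
Qed.

Lemma list_argmax {T : Type} (g : T -> nat) (A : list T) : forall (a : T), In a A ->
  exists mu, In mu A /\ forall v, In v A -> (g v <= g mu)%nat.
Proof.
  induction A as [|x A IH]; intros a0 Ha; [destruct Ha|].
  destruct A as [|y A].
  - exists x. split; [simpl; auto|]. intros v [<-|[]]. lia.
  - destruct (IH y (or_introl eq_refl)) as [mu [H1 H2]].
    destruct (Nat.le_gt_cases (g mu) (g x)).
    + exists x. split; [simpl; auto|]. intros v [<-|Hv]; [lia|]. specialize (H2 v Hv). lia.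
    + exists mu. split; [simpl; auto|]. intros v [<-|Hv]; [lia|]. auto.
Qed.

End ChainFacts.

Section Ball.
Variable V : Type.
Variable adj : V -> V -> Prop.
Variable nb : V -> list V.
Hypothesis Hnb : forall v w, adj v w -> In w (nb v).

Lemma ball c : forall n, exists Bl, forall l w, pth V adj c l w -> (length l <= n)%nat -> In w Bl.
Proof.
  induction n as [|n [Bl IH]].
  - exists [c]. intros l w Hp Hl. destruct l; [|simpl in Hl; lia]. inversion Hp; subst. simpl; auto.
  - exists (Bl ++ flat_map nb Bl). intros l w Hp Hl.
    destruct (Nat.le_gt_cases (length l) n) as [Hn|Hn].
    + apply in_or_app. left. eapply IH; eauto.
    + destruct (pth_snoc_inv _ _ _ _ _ Hp) as [l' [p [Hp' [Hpw [El _]]]]].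
      { intros ->. simpl in Hn. lia. }
      apply in_or_app. right. apply in_flat_map. exists p. split; [|apply Hnb; auto].
      eapply IH; eauto. lia.
Qed.
End Ball.

Lemma nat_above (x : R) : exists N : nat, x <= INR N.
Proof.
  destruct (archimed x) as [H1 _].
  destruct (Z_le_gt_dec 0 (up x)) as [Hz|Hz].
  - exists (Z.to_nat (up x)). rewrite INR_IZR_INZ, Z2Nat.id; auto. lra.
  - exists 0%nat. simpl. apply Z.gt_lt in Hz. apply IZR_lt in Hz. simpl in Hz. lra.
Qed.

Section XSide.
Variable X : Type.
Variable d : X -> X -> R.
Hypothesis Hm : is_metric d.
Hypothesis Hg : geodesic d.

Lemma d_pos x y : 0 <= d x y. Proof. apply Hm. Qed.
Lemma d_refl x : d x x = 0. Proof. apply Hm. reflexivity. Qed.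
Lemma d_sym x y : d x y = d y x. Proof. apply Hm. Qed.
Lemma d_tri x y z : d x z <= d x y + d y z. Proof. apply Hm. Qed.

Inductive chX (P : X -> Prop) : X -> X -> Prop :=
| chX0 x : P x -> chX P x x
| chXS x y z : P x -> d x y <= 1 -> chX P y z -> chX P x z.

Lemma chX_l P x y : chX P x y -> P x.
Proof. destruct 1; auto. Qed.
Lemma chX_r P x y : chX P x y -> P y.
Proof. induction 1; auto. Qed.
Lemma chX_trans P x y z : chX P x y -> chX P y z -> chX P x z.
Proof. induction 1; intros; auto. econstructor; eauto. Qed.
Lemma chX_sym P x y : chX P x y -> chX P y x.
Proof.
  induction 1 as [x Hx|x y z Hx Hd Hc IH]; [constructor; auto|].
  apply chX_trans with y; [exact IH|].
  apply chXS with x; [apply (chX_l _ _ _ Hc)|rewrite d_sym; exact Hd|constructor; exact Hx].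
Qed.
Lemma chX_mono (P Q : X -> Prop) x y : (forall z, P z -> Q z) -> chX P x y -> chX Q x y.
Proof. intros H. induction 1; econstructor; eauto. Qed.

Lemma geod_seg (g : R -> X) (D : R)
  (Hiso : forall s t, 0 <= s <= D -> 0 <= t <= D -> d (g s) (g t) = Rabs (s - t))
  (P : X -> Prop) : forall s t, 0 <= s <= t -> t <= D ->
  (forall u, s <= u <= t -> P (g u)) -> chX P (g s) (g t).
Proof.
  intros s t Hs Ht HP. destruct (nat_above (t - s)) as [N HN].
  revert s Hs HP HN. induction N as [|N IH]; intros s Hs HP HN.
  - simpl in HN. replace t with s by lra. constructor. apply HP; lra.
  - destruct (Rle_dec (t - s) 1) as [H1|H1].
    + apply chXS with (g t); [apply HP; lra| |constructor; apply HP; lra].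
      rewrite Hiso by lra. split_Rabs; lra.
    + apply chXS with (g (s + 1)); [apply HP; lra| |].
      * rewrite Hiso by lra. split_Rabs; lra.
      * apply IH; [lra| intros u Hu; apply HP; lra|]. rewrite S_INR in HN. lra.
Qed.

Variable V : Type.
Variable adj : V -> V -> Prop.
Hypothesis Hsym : forall u v, adj u v -> adj v u.
Hypothesis Hconn : connected_graph V adj.
Hypothesis Hacyc : acyclic V adj.
Variable f0 : X -> V.
Variables L C0 : R.
Hypothesis HL : 1 <= L.
Hypothesis HC0 : 0 <= C0.
Hypothesis Hf1 : forall a b, INR (dn V adj (f0 a) (f0 b)) <= L * d a b + C0.
Hypothesis Hf2 : forall a b, d a b <= L * (INR (dn V adj (f0 a) (f0 b)) + C0).

Lemma chX_sep P a b mu : chX P a b -> Sep V adj (f0 a) (f0 b) mu ->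
  exists z, P z /\ INR (dn V adj (f0 z) mu) <= L + C0.
Proof.
  induction 1 as [x Hx|x y z Hx Hd Hc IH]; intros HS.
  - exists x. split; auto. specialize (HS [] (pth_nil _ _ _)). simpl in HS.
    destruct HS as [<-|[]]. rewrite dn_refl by auto. simpl. lra.
  - destruct (classic (Sep V adj (f0 y) (f0 z) mu)) as [HS'|HS']; [auto|].
    exists x. split; auto.
    unfold Sep in HS'. apply not_all_ex_not in HS'. destruct HS' as [l Hl].
    apply imply_to_and in Hl. destruct Hl as [Hl Hnl].
    destruct (dn_path V adj Hconn (f0 x) (f0 y)) as [l0 [Hl0 El0]].
    pose proof (HS _ (pth_app _ _ _ _ _ _ _ Hl0 Hl)) as Hin.
    destruct (pth_In_app _ _ _ _ _ _ _ _ Hl0 Hl Hin) as [Hin'|Hin']; [|contradiction].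
    destruct (pth_prefix _ _ _ _ _ _ Hl0 Hin') as [l1 [Hl1 [Hlen _]]].
    pose proof (dn_le _ _ Hconn _ _ _ Hl1).
    apply le_INR in H. apply le_INR in Hlen. rewrite El0 in Hlen.
    pose proof (Hf1 x y). nra.
Qed.

Variable x0 : X.
Variable M : R.
Hypothesis HM : L * C0 <= M.
Hypothesis HM0 : 0 < M.

Definition h (z : X) : R := d x0 z.
Definition E (k : nat) (x y : X) : Prop := chX (fun z => INR k - M <= h z) x y.

Definition J : R := L + C0.
Definition B : R := L * (2 * J + C0).
Definition K : R := 2 * M + 4 * B.

Lemma geod_from (x : X) : exists g : R -> X, g 0 = x0 /\ g (h x) = x /\
  (forall s t, 0 <= s <= h x -> 0 <= t <= h x -> d (g s) (g t) = Rabs (s - t)) /\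
  (forall u, 0 <= u <= h x -> h (g u) = u).
Proof.
  destruct (Hg x0 x) as [g [H0 [H1 H2]]]. exists g. split; [|split; [|split]]; auto.
  intros u Hu. unfold h. rewrite <- H0 at 1. rewrite H2 by (unfold h in *; lra).
  rewrite Rabs_left1 by lra. lra.
Qed.

Lemma dn_f0_tri a b mu : INR (dn V adj (f0 a) (f0 b)) <=
  INR (dn V adj (f0 a) mu) + INR (dn V adj (f0 b) mu).
Proof.
  rewrite <- plus_INR. apply le_INR. rewrite (dn_sym V adj Hsym Hconn (f0 b) mu).
  apply dn_tri; auto.
Qed.

Lemma bottleneck k x y : E k x y -> INR k <= h x -> INR k <= h y ->
  d x y <= h x + h y - 2 * INR k + K.
Proof.
  intros HE Hx Hy.
  destruct (geod_from x) as [gx [Gx0 [Gx1 [Gx2 Gx3]]]].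
  destruct (geod_from y) as [gy [Gy0 [Gy1 [Gy2 Gy3]]]].
  pose proof (pos_INR k) as Hk.
  set (x' := gx (INR k)). set (y' := gy (INR k)).
  assert (Hxx' : d x' x = h x - INR k).
  { replace (d x' x) with (d (gx (INR k)) (gx (h x))) by (rewrite Gx1; reflexivity).
    rewrite Gx2 by lra. split_Rabs; lra. }
  assert (Hyy' : d y' y = h y - INR k).
  { replace (d y' y) with (d (gy (INR k)) (gy (h y))) by (rewrite Gy1; reflexivity).
    rewrite Gy2 by lra. split_Rabs; lra. }
  assert (E1 : E k x' x).
  { unfold x'. enough (HH : E k (gx (INR k)) (gx (h x))) by (rewrite Gx1 in HH; exact HH). apply (geod_seg gx (h x) Gx2); try lra.
    intros u Hu. rewrite Gx3 by lra. lra. }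
  assert (E2 : E k y' y).
  { unfold y'. enough (HH : E k (gy (INR k)) (gy (h y))) by (rewrite Gy1 in HH; exact HH). apply (geod_seg gy (h y) Gy2); try lra.
    intros u Hu. rewrite Gy3 by lra. lra. }
  assert (E3 : E k x' y').
  { apply chX_trans with x; auto. apply chX_trans with y; auto. apply chX_sym; auto. }
  assert (C1 : chX (fun z => h z + d z x' = INR k) x0 x').
  { unfold x'. rewrite <- Gx0. apply (geod_seg gx (h x) Gx2); try lra.
    intros u Hu. rewrite Gx3 by lra. rewrite Gx2 by lra. split_Rabs; lra. }
  assert (C2 : chX (fun z => h z + d z y' = INR k) x0 y').
  { unfold y'. rewrite <- Gy0. apply (geod_seg gy (h y) Gy2); try lra.
    intros u Hu. rewrite Gy3 by lra. rewrite Gy2 by lra. split_Rabs; lra. }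
  destruct (median V adj Hsym Hconn Hacyc (f0 x0) (f0 x') (f0 y')) as [mu [S1 [S2 S3]]].
  destruct (chX_sep _ _ _ _ C1 S2) as [p [Hp1 Hp2]].
  destruct (chX_sep _ _ _ _ C2 S3) as [q [Hq1 Hq2]].
  destruct (chX_sep _ _ _ _ E3 S1) as [z [Hz1 Hz2]].
  assert (Dpz : d p z <= B).
  { pose proof (Hf2 p z). pose proof (dn_f0_tri p z mu). unfold B, J in *. nra. }
  assert (Dqz : d q z <= B).
  { pose proof (Hf2 q z). pose proof (dn_f0_tri q z mu). unfold B, J in *. nra. }
  assert (Dpq : d p q <= 2 * B).
  { pose proof (d_tri p z q). rewrite (d_sym z q) in H. lra. }
  assert (Hhz : h z <= h p + d p z) by (apply d_tri).
  assert (Hhz' : h z <= h q + d q z) by (apply d_tri).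
  pose proof (d_tri x x' y). pose proof (d_tri x' p y). pose proof (d_tri p q y).
  pose proof (d_tri q y' y).
  rewrite (d_sym x x') in H. rewrite (d_sym x' p) in H0.
  unfold K. lra.
Qed.

Lemma h_pos x : 0 <= h x. Proof. apply d_pos. Qed.

Lemma E_refl k x : INR k - M <= h x -> E k x x.
Proof. intros H. constructor. exact H. Qed.
Lemma E_sym k x y : E k x y -> E k y x. Proof. apply chX_sym. Qed.
Lemma E_trans k x y z : E k x y -> E k y z -> E k x z. Proof. apply chX_trans. Qed.
Lemma E_mono k k' x y : (k' <= k)%nat -> E k x y -> E k' x y.
Proof.
  intros Hk. apply chX_mono. intros z Hz. apply le_INR in Hk. lra.
Qed.
Lemma E_ext k x y : E k x y -> E k x = E k y.
Proof.
  intros H. apply functional_extensionality. intros z. apply propositional_extensionality.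
  split; intros H'.
  - apply E_trans with x; auto. apply E_sym; auto.
  - apply E_trans with y; auto.
Qed.
Lemma E_all0 x y : E 0 x y.
Proof.
  destruct (Hg x y) as [g [G0 [G1 G2]]].
  rewrite <- G0, <- G1. apply (geod_seg g (d x y) G2); try lra.
  - split; [lra|apply d_pos].
  - intros u Hu. simpl. pose proof (h_pos (g u)). lra.
Qed.

Definition isV (p : nat * (X -> Prop)) : Prop := exists x, INR (fst p) <= h x /\ snd p = E (fst p) x.
Definition VV : Type := {p : nat * (X -> Prop) | isV p}.
Definition lvl (u : VV) : nat := fst (proj1_sig u).
Definition rep (u : VV) : X := proj1_sig (constructive_indefinite_description _ (proj2_sig u)).
Lemma rep_spec u : INR (lvl u) <= h (rep u) /\ snd (proj1_sig u) = E (lvl u) (rep u).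
Proof. unfold rep. destruct (constructive_indefinite_description _ (proj2_sig u)) as [x Hx]. exact Hx. Qed.

Definition mk (k : nat) (x : X) (H : INR k <= h x) : VV :=
  exist _ (k, E k x) (ex_intro _ x (conj H eq_refl)).

Lemma VV_eq (u v : VV) : proj1_sig u = proj1_sig v -> u = v.
Proof.
  destruct u as [p Hp], v as [q Hq]; simpl. intros ->. f_equal. apply proof_irrelevance.
Qed.

Lemma mk_eq k x y Hx Hy : E k x y -> mk k x Hx = mk k y Hy.
Proof. intros H. apply VV_eq. simpl. rewrite (E_ext _ _ _ H). reflexivity. Qed.

Lemma mk_rep u : u = mk (lvl u) (rep u) (proj1 (rep_spec u)).
Proof.
  apply VV_eq. simpl. destruct (rep_spec u) as [_ H2]. rewrite <- H2.
  unfold lvl. destruct (proj1_sig u); reflexivity.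
Qed.

Lemma E_rep_self u : E (lvl u) (rep u) (rep u).
Proof. apply E_refl. pose proof (proj1 (rep_spec u)). lra. Qed.

Lemma rep_mk k x H : E k x (rep (mk k x H)).
Proof.
  pose proof (rep_spec (mk k x H)) as [H1 H2]. simpl in H2. unfold lvl in *; simpl in *.
  rewrite H2. apply E_refl. lra.
Qed.

Lemma lvl_mk k x H : lvl (mk k x H) = k. Proof. reflexivity. Qed.

Lemma par_ok (u : VV) : INR (pred (lvl u)) <= h (rep u).
Proof. pose proof (proj1 (rep_spec u)). pose proof (le_INR _ _ (Nat.le_pred_l (lvl u))). lra. Qed.

Definition par (u : VV) : VV := mk (pred (lvl u)) (rep u) (par_ok u).

Definition adjV (u v : VV) : Prop :=
  (lvl v = S (lvl u) /\ par v = u) \/ (lvl u = S (lvl v) /\ par u = v).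

Lemma par_mk k x H H' : par (mk (S k) x H) = mk k x H'.
Proof.
  unfold par. apply mk_eq. simpl. apply E_sym. apply E_mono with (S k); [lia|]. apply rep_mk.
Qed.

Lemma E_rep_par u : E (pred (lvl u)) (rep u) (rep (par u)).
Proof. apply rep_mk. Qed.

Lemma lvl_par u : lvl (par u) = pred (lvl u). Proof. reflexivity. Qed.

Lemma mk_cast n n' x Hn Hn' : n = n' -> mk n x Hn = mk n' x Hn'.
Proof. intros ->. apply mk_eq. apply E_refl. lra. Qed.

Lemma INR_le_h_S k x : INR (S k) <= h x -> INR k <= h x.
Proof. intros H. rewrite S_INR in H. lra. Qed.

Lemma up_walk x k m : forall (H : INR (k + m) <= h x) H', walk VV adjV (mk (k + m) x H) (mk k x H') m.
Proof.
  induction m as [|m IH]; intros H H'.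
  - rewrite (mk_cast (k + 0) k x H H' (Nat.add_0_r k)). constructor.
  - assert (H1 : INR (S (k + m)) <= h x) by (rewrite <- Nat.add_succ_r; exact H).
    rewrite (mk_cast _ (S (k + m)) x H H1 (Nat.add_succ_r k m)).
    pose proof (INR_le_h_S _ _ H1) as H2.
    apply walkS with (mk (k + m) x H2).
    + right. split; [reflexivity|]. apply par_mk.
    + apply IH.
Qed.

Lemma walk_lb u v N : walk VV adjV u v N -> exists j, (j <= lvl u)%nat /\ (j <= lvl v)%nat /\
  E j (rep u) (rep v) /\ (lvl u + lvl v <= N + 2 * j)%nat.
Proof.
  induction 1 as [u|u w v N Hadj Hw IH].
  - exists (lvl u). repeat split; try lia. apply E_rep_self.
  - destruct IH as [j [Hj1 [Hj2 [Hj3 Hj4]]]].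
    destruct Hadj as [[Hl Hp]|[Hl Hp]].
    +
      assert (Hwu : E (lvl u) (rep w) (rep u)).
      { pose proof (E_rep_par w) as HH. rewrite Hp in HH. rewrite Hl in HH. exact HH. }
      destruct (Nat.le_gt_cases j (lvl u)) as [Hju|Hju].
      * exists j. repeat split; try lia.
        apply E_trans with (rep w); auto. apply E_mono with (lvl u); auto. apply E_sym; auto.
      * exists (lvl u). repeat split; try lia.
        apply E_trans with (rep w); [apply E_sym; auto|]. apply E_mono with j; [lia|auto].
    +
      assert (Huw : E (lvl w) (rep u) (rep w)).
      { pose proof (E_rep_par u) as HH. rewrite Hp in HH. rewrite Hl in HH. exact HH. }
      exists j. repeat split; try lia.
      apply E_trans with (rep w); auto. apply E_mono with (lvl w); auto.
Qed.

Definition r0 : VV := mk 0 x0 (h_pos x0).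

Lemma adjV_sym u v : adjV u v -> adjV v u.
Proof. unfold adjV. tauto. Qed.

Lemma walkV_rev u v n : walk VV adjV u v n -> walk VV adjV v u n.
Proof.
  intros H. destruct (walk_pth _ _ _ _ _ H) as [l [Hl El]].
  destruct (pth_rev' _ _ adjV_sym _ _ _ Hl) as [l' [Hl' [El' _]]].
  rewrite <- El, <- El'. apply pth_walk. exact Hl'.
Qed.

Lemma walkV_app u v w n m : walk VV adjV u v n -> walk VV adjV v w m -> walk VV adjV u w (n + m).
Proof. induction 1; simpl; intros; auto. econstructor; eauto. Qed.

Lemma to_root u : walk VV adjV u r0 (lvl u).
Proof.
  rewrite (mk_rep u) at 1.
  pose proof (up_walk (rep u) 0 (lvl u) (proj1 (rep_spec u)) (h_pos (rep u))) as HW.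
  simpl in HW. rewrite (mk_eq 0 (rep u) x0 (h_pos (rep u)) (h_pos x0) (E_all0 _ _)) in HW.
  exact HW.
Qed.

Lemma connV : connected_graph VV adjV.
Proof.
  intros u v. exists (lvl u + lvl v)%nat. apply walkV_app with r0; [apply to_root|].
  apply walkV_rev. apply to_root.
Qed.

Lemma adj_low u b : adjV u b -> (lvl b <= lvl u)%nat -> b = par u.
Proof. intros [[H1 H2]|[H1 H2]] H3; [lia|auto]. Qed.

Lemma acycV : acyclic VV adjV.
Proof.
  intros v l Hlen Hnd Hch.
  destruct (list_argmax lvl (v :: l) v (or_introl eq_refl)) as [w [Hw Hmax]].
  destruct (rotate VV adjV v l w Hw Hch) as [Bl [Hperm Hc]].
  pose proof (Permutation_length Hperm) as Elen.
  pose proof (Permutation_NoDup Hperm Hnd) as Hnd'.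
  destruct Bl as [|b1 Bl]; [simpl in *; lia|].
  destruct Bl as [|b2 Bl] using rev_ind; [simpl in *; lia|].
  clear IHBl.
  assert (Hb1 : In b1 (v :: l)) by (apply (Permutation_in _ (Permutation_sym Hperm)); simpl; auto).
  assert (Hb2 : In b2 (v :: l)).
  { apply (Permutation_in _ (Permutation_sym Hperm)). simpl. right. right. apply in_or_app. right. simpl; auto. }
  replace ((w :: b1 :: Bl ++ [b2]) ++ [w]) with ((w :: b1 :: Bl) ++ b2 :: [w]) in Hc
    by (simpl; rewrite <- app_assoc; reflexivity).
  apply chain_app in Hc. destruct Hc as [Hc1 Hc].
  assert (Hwb1 : adjV w b1) by (destruct Hc1; auto).
  assert (Hb2w : adjV b2 w) by (destruct Hc; auto).
  apply adjV_sym in Hb2w.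
  pose proof (adj_low _ _ Hwb1 (Hmax _ Hb1)) as E1.
  pose proof (adj_low _ _ Hb2w (Hmax _ Hb2)) as E2.
  inversion Hnd' as [|? ? _ Hnd'']. inversion Hnd'' as [|? ? Hn1 _].
  apply Hn1. apply in_or_app. right. rewrite E1, <- E2. simpl; auto.
Qed.

Lemma treeV : simplicial_tree VV adjV.
Proof.
  split; [exact (inhabits r0)|]. split; [exact adjV_sym|]. split; [|split; [exact connV|exact acycV]].
  intros v [[H1 _]|[H1 _]]; lia.
Qed.

Lemma lev_ex x : exists n : nat, INR n <= h x < INR n + 1.
Proof.
  destruct (nat_above (h x)) as [N HN].
  destruct (nat_min_ex (fun n => h x < INR n + 1)) as [n [Hn Hmin]].
  { exists N. lra. }
  exists n. split; auto. destruct n as [|n].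
  - simpl. apply h_pos.
  - destruct (Rlt_le_dec (h x) (INR n + 1)) as [Hl|Hl].
    + specialize (Hmin n Hl). lia.
    + rewrite S_INR. lra.
Qed.

Definition lev (x : X) : nat := proj1_sig (constructive_indefinite_description _ (lev_ex x)).
Lemma lev_spec x : INR (lev x) <= h x < INR (lev x) + 1.
Proof. unfold lev. destruct (constructive_indefinite_description _ (lev_ex x)); auto. Qed.

Lemma lev_unique x k : INR k <= h x < INR k + 1 -> lev x = k.
Proof.
  intros Hk. pose proof (lev_spec x).
  assert (INR (lev x) < INR (k + 1)) by (rewrite plus_INR; simpl; lra).
  assert (INR k < INR (lev x + 1)) by (rewrite plus_INR; simpl; lra).
  apply INR_lt in H0. apply INR_lt in H1. lia.
Qed.

Definition fV (x : X) : VV := mk (lev x) x (proj1 (lev_spec x)).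

Lemma fV_eq k z H : lev z = k -> fV z = mk k z H.
Proof. intros Hk. apply mk_cast. exact Hk. Qed.

Lemma zrep_ex u : exists z, h z = INR (lvl u) /\ E (lvl u) z (rep u).
Proof.
  destruct (geod_from (rep u)) as [g [G0 [G1 [G2 G3]]]].
  pose proof (proj1 (rep_spec u)) as Hr. pose proof (pos_INR (lvl u)).
  exists (g (INR (lvl u))). split; [apply G3; lra|].
  enough (HH : E (lvl u) (g (INR (lvl u))) (g (h (rep u)))) by (rewrite G1 in HH; exact HH).
  apply (geod_seg g (h (rep u)) G2); try lra.
  intros v Hv. rewrite G3 by lra. lra.
Qed.

Definition zrep (u : VV) : X := proj1_sig (constructive_indefinite_description _ (zrep_ex u)).
Lemma zrep_spec u : h (zrep u) = INR (lvl u) /\ E (lvl u) (zrep u) (rep u).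
Proof. unfold zrep. destruct (constructive_indefinite_description _ (zrep_ex u)); auto. Qed.

Lemma fV_zrep u : fV (zrep u) = u.
Proof.
  destruct (zrep_spec u) as [H1 H2].
  assert (Hl : lev (zrep u) = lvl u) by (apply lev_unique; lra).
  assert (H3 : INR (lvl u) <= h (zrep u)) by lra.
  rewrite (fV_eq (lvl u) (zrep u) H3 Hl).
  transitivity (mk (lvl u) (rep u) (proj1 (rep_spec u))); [apply mk_eq; exact H2|].
  symmetry. apply mk_rep.
Qed.

Lemma walk_down x n k Hn Hk : (k <= n)%nat -> walk VV adjV (mk n x Hn) (mk k x Hk) (n - k).
Proof.
  intros Hkn. assert (H : INR (k + (n - k)) <= h x) by (replace (k + (n - k))%nat with n by lia; exact Hn).
  rewrite (mk_cast n (k + (n - k)) x Hn H) by lia. apply up_walk.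
Qed.

Lemma dnV_le u v N : walk VV adjV u v N -> (dn VV adjV u v <= N)%nat.
Proof. intros H. apply (dn_spec VV adjV connV). exact H. Qed.

Lemma h_lip a b : h b <= h a + d a b.
Proof. apply d_tri. Qed.

Lemma dnV_upper a b : INR (dn VV adjV (fV a) (fV b)) <= d a b + 2.
Proof.
  set (n := lev a). set (m := lev b). set (mn := Nat.min n m).
  destruct (nat_min_ex (fun i => (i <= mn)%nat /\ E (mn - i) a b)) as [i0 [[Hi0 HE] Hmin]].
  { exists mn. split; [lia|]. rewrite Nat.sub_diag. apply E_all0. }
  set (k := (mn - i0)%nat) in *.
  pose proof (lev_spec a) as Ha. pose proof (lev_spec b) as Hb. fold n in Ha. fold m in Hb.
  assert (Hkn : (k <= n)%nat) by lia. assert (Hkm : (k <= m)%nat) by lia.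
  assert (Hka : INR k <= h a) by (pose proof (le_INR _ _ Hkn); lra).
  assert (Hkb : INR k <= h b) by (pose proof (le_INR _ _ Hkm); lra).
  assert (HW : walk VV adjV (fV a) (fV b) ((n - k) + (m - k))).
  { apply walkV_app with (mk k a Hka).
    - apply walk_down. exact Hkn.
    - rewrite (mk_eq k a b Hka Hkb HE). apply walkV_rev. apply walk_down. exact Hkm. }
  apply dnV_le in HW. apply le_INR in HW.
  rewrite plus_INR, !minus_INR in HW by lia.
  assert (INR (n - k + (m - k)) = INR n - INR k + (INR m - INR k)) by (rewrite plus_INR, !minus_INR by lia; reflexivity).
  pose proof (h_lip a b). pose proof (h_lip b a). rewrite d_sym in H1.
  destruct (Nat.eq_dec i0 0) as [Hi|Hi].
  - assert (Hkmn : k = mn) by (unfold k; lia).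
    assert (Hmn : mn = Nat.min n m) by reflexivity.
    destruct (Nat.le_ge_cases n m) as [Hnm|Hnm].
    + assert (Hkk : k = n) by lia. rewrite Hkk in HW. lra.
    + assert (Hkk : k = m) by lia. rewrite Hkk in HW. lra.
  - assert (HnE : ~ E (S k) a b).
    { intros HE'. specialize (Hmin (i0 - 1)%nat). assert (i0 <= i0 - 1)%nat; [|lia].
      apply Hmin. split; [lia|]. replace (mn - (i0 - 1))%nat with (S k) by (unfold k; lia). exact HE'. }
    destruct (Hg a b) as [g [G0 [G1 G2]]].
    assert (Hex : exists u, 0 <= u <= d a b /\ h (g u) < INR (S k) - M).
    { apply NNPP. intros Hno. apply HnE. pose proof (d_pos a b) as Hdp. rewrite <- G0, <- G1.
      apply (geod_seg g (d a b) G2); [lra|lra|].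
      intros u Hu. apply Rnot_lt_le. intros Hl. apply Hno. exists u. split; auto. }
    destruct Hex as [u [Hu Hgu]].
    assert (Dsplit : d a b = d a (g u) + d (g u) b).
    { replace (d a (g u)) with (d (g 0) (g u)) by (rewrite G0; reflexivity).
      replace (d (g u) b) with (d (g u) (g (d a b))) by (rewrite G1; reflexivity).
      rewrite !G2 by lra. split_Rabs; lra. }
    pose proof (h_lip (g u) a). pose proof (h_lip (g u) b). rewrite (d_sym (g u) a) in H2.
    rewrite S_INR in Hgu. lra.
Qed.

Lemma dnV_lower a b : d a b <= INR (dn VV adjV (fV a) (fV b)) + 2 + K.
Proof.
  destruct (dn_spec VV adjV connV (fV a) (fV b)) as [HW _].
  destruct (walk_lb _ _ _ HW) as [j [Hj1 [Hj2 [Hj3 Hj4]]]].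
  change (lvl (fV a)) with (lev a) in Hj1, Hj4. change (lvl (fV b)) with (lev b) in Hj2, Hj4.
  unfold fV in Hj3.
  pose proof (rep_mk _ _ (proj1 (lev_spec a))) as Ra.
  pose proof (rep_mk _ _ (proj1 (lev_spec b))) as Rb.
  assert (Eab : E j a b).
  { apply E_trans with (rep (mk (lev a) a (proj1 (lev_spec a)))); [apply E_mono with (lev a); auto|].
    apply E_trans with (rep (mk (lev b) b (proj1 (lev_spec b)))); auto.
    apply E_sym. apply E_mono with (lev b); auto. }
  pose proof (lev_spec a) as Ha. pose proof (lev_spec b) as Hb.
  pose proof (le_INR _ _ Hj1). pose proof (le_INR _ _ Hj2).
  pose proof (bottleneck j a b Eab ltac:(lra) ltac:(lra)).
  apply le_INR in Hj4. rewrite !plus_INR, mult_INR in Hj4. simpl in Hj4.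
  lra.
Qed.

Definition vpt (u : VV) : TPoint VV adjV := Build_TPoint VV adjV u u 0 (or_introl (conj eq_refl eq_refl)).
Definition fnew (x : X) : TPoint VV adjV := vpt (fV x).

Lemma K_pos : 0 <= K.
Proof. unfold K, B, J. assert (0 <= L * (2 * (L + C0) + C0)) by (apply Rmult_le_pos; lra). lra. Qed.

Lemma QI_new : is_QI d tree_dist fnew 1 (K + 4).
Proof.
  pose proof K_pos. split.
  - intros a b. pose proof (TD VV adjV adjV_sym connV (fnew a) (fnew b)) as HT.
    apply Rabs_le_inv in HT. simpl in HT.
    pose proof (dnV_upper a b). pose proof (dnV_lower a b).
    rewrite Rinv_1. lra.
  - intros y. exists (zrep (tp_a y)).
    pose proof (TD VV adjV adjV_sym connV y (fnew (zrep (tp_a y)))) as HT.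
    apply Rabs_le_inv in HT. simpl in HT. rewrite fV_zrep in HT.
    rewrite (dn_refl VV adjV connV) in HT. simpl in HT. lra.
Qed.

Lemma Close k z z' : h z = INR k -> h z' = INR k -> d z z' <= 2 * M -> E k z z'.
Proof.
  intros Hz Hz' Hd.
  destruct (Hg z z') as [g [G0 [G1 G2]]]. pose proof (d_pos z z').
  rewrite <- G0, <- G1. apply (geod_seg g (d z z') G2); [lra|lra|].
  intros u Hu.
  pose proof (h_lip (g u) z). pose proof (h_lip (g u) z').
  replace (d (g u) z) with (d (g 0) (g u)) in H0 by (rewrite G0; apply d_sym).
  replace (d (g u) z') with (d (g u) (g (d z z'))) in H1 by (rewrite G1; reflexivity).
  rewrite G2 in H0, H1 by lra. split_Rabs; lra.
Qed.

Lemma fV_E z z' : lev z = lev z' -> E (lev z) z z' -> fV z = fV z'.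
Proof.
  intros Hl HE. assert (H' : INR (lev z) <= h z') by (rewrite Hl; apply lev_spec).
  rewrite (fV_eq (lev z) z' H' (eq_sym Hl)). unfold fV. apply mk_eq. exact HE.
Qed.

Lemma same_level_eq u v : lvl u = lvl v -> d (zrep u) (zrep v) <= 2 * M -> E (lvl u) (zrep u) (zrep v) \/ True -> u = v.
Proof.
  intros Hl Hd _.
  destruct (zrep_spec u) as [Hu1 _]. destruct (zrep_spec v) as [Hv1 _].
  assert (HE : E (lvl u) (zrep u) (zrep v)) by (apply Close; try lra; rewrite Hl; lra).
  rewrite <- (fV_zrep u), <- (fV_zrep v).
  assert (Lu : lev (zrep u) = lvl u) by (apply lev_unique; lra).
  assert (Lv : lev (zrep v) = lvl u) by (apply lev_unique; rewrite Hl; lra).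
  apply fV_E; [congruence|]. rewrite Lu. exact HE.
Qed.

Lemma f0_same u v : lvl u = lvl v -> f0 (zrep u) = f0 (zrep v) -> u = v.
Proof.
  intros Hl Hf. apply same_level_eq; auto.
  pose proof (Hf2 (zrep u) (zrep v)). rewrite Hf, (dn_refl V adj Hconn) in H. simpl in H. nra.
Qed.

Lemma countV : countable_graph V adj -> countable_graph VV adjV.
Proof.
  intros [cT HcT]. exists (fun u => Cantor.to_nat (lvl u, cT (f0 (zrep u)))).
  intros u v Heq. apply (f_equal Cantor.of_nat) in Heq. rewrite !cancel_of_to in Heq.
  injection Heq as E1 E2. apply HcT in E2. apply f0_same; auto.
Qed.

Lemma child_E u w : par w = u -> lvl w = S (lvl u) -> E (lvl u) (zrep w) (rep u).
Proof.
  intros Hp Hl. destruct (zrep_spec w) as [_ Hz].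
  pose proof (E_rep_par w) as HH. rewrite Hp, Hl in HH. simpl in HH.
  apply E_trans with (rep w); auto. apply E_mono with (lvl w); [lia|auto].
Qed.

Lemma lfV : locally_finite_graph V adj -> locally_finite_graph VV adjV.
Proof.
  intros Hlf u.
  set (nb := fun v => proj1_sig (constructive_indefinite_description _ (Hlf v))).
  assert (Hnb : forall v w, adj v w -> In w (nb v)).
  { intros v w. unfold nb. destruct (constructive_indefinite_description _ (Hlf v)); simpl; auto. }
  destruct (classic (exists w1, lvl w1 = S (lvl u) /\ par w1 = u)) as [[w1 [Hw1a Hw1b]]|Hno].
  2: { exists [par u]. intros w [[H1 H2]|[H1 H2]]; [exfalso; apply Hno; eauto|simpl; auto]. }
  destruct (nat_above (L * (2 + K) + C0)) as [N HN].
  destruct (ball V adj nb Hnb (f0 (zrep w1)) N) as [Bl HBl].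
  set (P := fun t w => lvl w = S (lvl u) /\ par w = u /\ f0 (zrep w) = t).
  exists (par u :: map (fun t => epsilon (inhabits u) (P t)) Bl).
  intros w [[H1 H2]|[H1 H2]]; [|simpl; auto].
  right. apply in_map_iff. exists (f0 (zrep w)). split.
  - destruct (epsilon_spec (inhabits u) (P (f0 (zrep w))) (ex_intro _ w (conj H1 (conj H2 eq_refl))))
      as [Ha [Hb Hc]].
    apply f0_same; [congruence|exact Hc].
  - destruct (dn_path V adj Hconn (f0 (zrep w1)) (f0 (zrep w))) as [l [Hl El]].
    apply (HBl l); auto. rewrite El.
    assert (HE : E (lvl u) (zrep w1) (zrep w)).
    { apply E_trans with (rep u); [apply child_E; auto|]. apply E_sym. apply child_E; auto. }
    destruct (zrep_spec w1) as [Hz1 _]. destruct (zrep_spec w) as [Hz2 _].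
    rewrite Hw1a in Hz1. rewrite H1 in Hz2. rewrite S_INR in Hz1, Hz2.
    pose proof (bottleneck _ _ _ HE ltac:(lra) ltac:(lra)).
    pose proof (Hf1 (zrep w1) (zrep w)).
    assert (INR (dn V adj (f0 (zrep w1)) (f0 (zrep w))) <= INR N) by nra.
    apply INR_le. exact H3.
Qed.

End XSide.

Lemma main_dir (P : forall V : Type, (V -> V -> Prop) -> Prop)
  (HP : forall X d (Hm : is_metric d) (Hg : geodesic d) (V : Type) (adj : V -> V -> Prop)
     (Hsym : forall u v, adj u v -> adj v u) (Hconn : connected_graph V adj) (Hacyc : acyclic V adj)
     f0 L C0, 1 <= L -> 0 <= C0 ->
     (forall a b, INR (dn V adj (f0 a) (f0 b)) <= L * d a b + C0) ->
     (forall a b, d a b <= L * (INR (dn V adj (f0 a) (f0 b)) + C0)) ->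
     forall x0 M, L * C0 <= M -> 0 < M -> P V adj -> P (VV X d x0 M) (adjV X d x0 M))
  (X : Type) (d : X -> X -> R) (Hm : is_metric d) (Hg : geodesic d) :
  (exists L C, 1 <= L /\ 0 <= C /\ QI_to_tree P d L C) ->
  (exists C', 0 <= C' /\ QI_to_tree P d 1 C').
Proof.
  intros [L [C [HL [HC [V [adj [HT [HPV [f Hf]]]]]]]]].
  destruct HT as [[v] [Hsym [Hirr [Hconn Hacyc]]]].
  destruct Hf as [Hf Hcov].
  destruct (Hcov (Build_TPoint V adj v v 0 (or_introl (conj eq_refl eq_refl)))) as [x0 _].
  set (f0 := fun x => tp_a (f x)).
  set (C0 := C + 2).
  assert (Hf1 : forall a b, INR (dn V adj (f0 a) (f0 b)) <= L * d a b + C0).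
  { intros a b. pose proof (TD V adj Hsym Hconn (f a) (f b)) as HT. apply Rabs_le_inv in HT.
    destruct (Hf a b). unfold f0, C0. lra. }
  assert (Hf2 : forall a b, d a b <= L * (INR (dn V adj (f0 a) (f0 b)) + C0)).
  { intros a b. pose proof (TD V adj Hsym Hconn (f a) (f b)) as HT. apply Rabs_le_inv in HT.
    destruct (Hf a b) as [H1 _].
    assert (HH : / L * d a b <= INR (dn V adj (f0 a) (f0 b)) + C0) by (unfold f0, C0; lra).
    apply Rmult_le_compat_l with (r := L) in HH; [|lra].
    rewrite <- Rmult_assoc, Rinv_r in HH by lra. lra. }
  assert (HC0 : 0 <= C0) by (unfold C0; lra).
  set (M := L * C0 + 1).
  assert (HM : L * C0 <= M) by (unfold M; lra).
  assert (HM0 : 0 < M) by (unfold M; nra).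
  exists (K L C0 M + 4). split; [pose proof (K_pos L C0 HL HC0 M HM0); lra|].
  exists (VV X d x0 M), (adjV X d x0 M). split; [apply treeV; auto|]. split.
  - apply (HP X d Hm Hg V adj Hsym Hconn Hacyc f0 L C0); auto.
  - exists (fnew X d Hm x0 M). apply (QI_new X d Hm Hg V adj Hsym Hconn Hacyc f0 L C0); auto.
Qed.

Lemma triv_dir (P : forall V : Type, (V -> V -> Prop) -> Prop) (X : Type) (d : X -> X -> R) :
  (exists C', 0 <= C' /\ QI_to_tree P d 1 C') ->
  (exists L C, 1 <= L /\ 0 <= C /\ QI_to_tree P d L C).
Proof. intros [C' [H1 H2]]. exists 1, C'. split; [lra|]. auto. Qed.

Theorem corollary4p24 :
  forall (X : Type) (d : X -> X -> R), is_metric d -> geodesic d ->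
  ((exists L C, 1 <= L /\ 0 <= C /\ QI_to_tree countable_graph d L C) <->
   (exists C', 0 <= C' /\ QI_to_tree countable_graph d 1 C')) /\
  ((exists L C, 1 <= L /\ 0 <= C /\ QI_to_tree locally_finite_graph d L C) <->
   (exists C', 0 <= C' /\ QI_to_tree locally_finite_graph d 1 C')).
Proof.
  intros X d Hm Hg. split; split; try apply triv_dir.
  - apply main_dir; auto. intros. eapply countV; eauto.
  - apply main_dir; auto. intros. eapply lfV; eauto.
Qed.
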